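(* Let $n\ge 1$. For $a\in\{0,1\}$ let $\lvert \hat a\rangle=\frac{1}{\sqrt2}(\lvert 0\rangle+(-1)^a\lvert 1\rangle)$. For bits $r_0,r_1,s\in\{0,1\}$ define the two-qubit state on qubits $A_0A_1$ $$\lvert\psi^{s}_{r_0r_1}\rangle_{A_0A_1}=\lvert r_0\rangle_{A_s}\otimes\lvert \hat r_1\rangle_{A_{\bar s}},$$ and for strings $\mathbf r_0,\mathbf r_1,\mathbf s\in\{0,1\}^n$ (with $j$-th entries $r_0^j,r_1^j,s^j$) define the $2n$-qubit state $\lvert\Psi^{\mathbf s}_{\mathbf r_0\mathbf r_1}\rangle_A=\bigotimes_{j=1}^n\lvert\psi^{s^j}_{r_0^jr_1^j}\rangle_{A_0^jA_1^j}$, where $A=A_0^1A_1^1\cdots A_0^nA_1^n$. Consider any (cheating) strategy consisting of: a finite-dimensional ancilla $E$ in a fixed pure state $\lvert\chi\rangle_E$; a unitary $U$ on $AE$, where $AE=B_0B_1B'$ is decomposed into three finite-dimensional subsystems; a projective measurement $\{R^{b'}\}_{b'\in\{0,1\}}$ on $B'$; and, for each $i\in\{0,1\}$, $\mathbf s\in\{0,1\}^n$, $b'\in\{0,1\}$, a projective measurement $\{\Pi^{\mathbf e}_{i\mathbf s b'}\}_{\mathbf e\in\{0,1\}^n}$ on $B_i$. Let $\lvert\Phi^{\mathbf s}_{\mathbf r_0\mathbf r_1}\rangle_{B_0B_1B'}=U(\lvert\Psi^{\mathbf s}_{\mathbf r_0\mathbf r_1}\rangle_A\otimes\lvert\chi\rangle_E)$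 and $$p_n=\frac{1}{2^{3n}}\sum_{\mathbf r_0,\mathbf r_1,\mathbf s\in\{0,1\}^n}\ \sum_{b'\in\{0,1\}}\langle\Phi^{\mathbf s}_{\mathbf r_0\mathbf r_1}\rvert\,\Pi^{\mathbf r_{b'}}_{0\mathbf s b'}\otimes\Pi^{\mathbf r_{\bar b'}}_{1\mathbf s b'}\otimes R^{b'}\,\lvert\Phi^{\mathbf s}_{\mathbf r_0\mathbf r_1}\rangle,$$ where $\bar b'=b'\oplus1$. Then for every such strategy, $$p_n\le\Bigl(\frac12+\frac{1}{2\sqrt2}\Bigr)^n.$$
   Context: $p_n$ is the probability that Bob, in a spacetime-constrained oblivious transfer protocol, simultaneously outputs $\mathbf r_{b'}$ from system $B_0$ and $\mathbf r_{\bar b'}$ from system $B_1$, when $\mathbf r_0,\mathbf r_1,\mathbf s$ are uniformly random and Bob receives $\lvert\Psi^{\mathbf s}_{\mathbf r_0\mathbf r_1}\rangle$; the measurements on $B_i$ may depend on $\mathbf s$ and on the outcome $b'$ of the measurement on $B'$. $\oplus$ is addition modulo 2. *)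

(* Defs.v *)
From HB Require Import structures.
From mathcomp Require Import all_boot all_order all_algebra.
From mathcomp Require Import reals complex.
Set Implicit Arguments. Unset Strict Implicit. Unset Printing Implicit Defensive.
Import Order.TTheory GRing.Theory Num.Theory.
Local Open Scope ring_scope.
Local Open Scope complex_scope.

Definition bits (n : nat) := {ffun 'I_n -> bool}.
(* computational basis of A = A_0^1 A_1^1 ... A_0^n A_1^n :
   for each j, the pair (value on A_0^j, value on A_1^j) *)
Definition Abasis (n : nat) := {ffun 'I_n -> bool * bool}.

Section Quantum.
Variable R : realType.
Local Notation C := R[i].

Definition ket_comp (a x : bool) : C := (x == a)%:R.
Definition ket_hat (a x : bool) : C :=
  ((Num.sqrt (2 : R))^-1)%:C * (if x then (-1) ^+ a else 1).

(* |psi^s_{r0 r1}>_{A0 A1} = |r0>_{A_s} (x) |\hat r1>_{A_{\bar s}};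
   q = (value on A0, value on A1) *)
Definition psi (s r0 r1 : bool) (q : bool * bool) : C :=
  if s then ket_comp r0 q.2 * ket_hat r1 q.1
  else ket_comp r0 q.1 * ket_hat r1 q.2.

Definition Psi (n : nat) (s r0 r1 : bits n) (a : Abasis n) : C :=
  \prod_(j < n) psi (s j) (r0 j) (r1 j) (a j).

(* vectors are functions T -> C on a finite basis, operators are
   matrices T -> T -> C  (M x y = <x|M|y>) *)
Definition is_unit_vector (T : finType) (v : T -> C) : Prop :=
  \sum_(x : T) (v x)^* * v x = 1.

Definition is_unitary_op (TA TB : finType) (U : TB -> TA -> C) : Prop :=
  (forall x y : TA, \sum_(b : TB) (U b x)^* * U b y = (x == y)%:R) /\
  (forall b c : TB, \sum_(x : TA) U b x * (U c x)^* = (b == c)%:R).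

Definition is_proj_meas (I T : finType) (P : I -> T -> T -> C) : Prop :=
  (forall i x y, P i y x = (P i x y)^*) /\
  (forall i x y, \sum_(z : T) P i x z * P i z y = P i x y) /\
  (forall x y, \sum_(i : I) P i x y = (x == y)%:R).

Definition Phi (n dE d0 d1 d' : nat) (chi : 'I_dE -> C)
  (U : 'I_d0 * 'I_d1 * 'I_d' -> Abasis n * 'I_dE -> C)
  (s r0 r1 : bits n) (b : 'I_d0 * 'I_d1 * 'I_d') : C :=
  \sum_(ae : Abasis n * 'I_dE) U b ae * (Psi s r0 r1 ae.1 * chi ae.2).

Definition success_prob (n dE d0 d1 d' : nat) (chi : 'I_dE -> C)
  (U : 'I_d0 * 'I_d1 * 'I_d' -> Abasis n * 'I_dE -> C)
  (Rm : bool -> 'I_d' -> 'I_d' -> C)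
  (Pi0 : bits n -> bool -> bits n -> 'I_d0 -> 'I_d0 -> C)
  (Pi1 : bits n -> bool -> bits n -> 'I_d1 -> 'I_d1 -> C) : C :=
  (2 ^+ (3 * n))^-1 *
  \sum_(r0 : bits n) \sum_(r1 : bits n) \sum_(s : bits n) \sum_(b' : bool)
    let rb := if b' then r1 else r0 in
    let rnb := if b' then r0 else r1 in
    \sum_(b : 'I_d0 * 'I_d1 * 'I_d') \sum_(c : 'I_d0 * 'I_d1 * 'I_d')
      (Phi chi U s r0 r1 b)^* *
      (Pi0 s b' rb b.1.1 c.1.1 * Pi1 s b' rnb b.1.2 c.1.2 * Rm b' b.2 c.2) *
      Phi chi U s r0 r1 c.

End Quantum.

(* Main.v *)
Require Import Defs.
From HB Require Import structures.
From mathcomp Require Import all_boot all_order all_algebra.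
From mathcomp Require Import reals complex.
From mathcomp Require Import ring.
From Stdlib Require Import FunctionalExtensionality.
Import Order.TTheory GRing.Theory Num.Theory.

Module GenM.
Local Open Scope ring_scope.
Set Implicit Arguments. Unset Strict Implicit. Unset Printing Implicit Defensive.

Section Lin.
Variable C : numClosedFieldType.

Definition dot (T : finType) (u v : T -> C) : C := \sum_x (u x)^* * v x.
Definition app (T : finType) (M : T -> T -> C) (u : T -> C) : T -> C :=
  fun x => \sum_y M x y * u y.
Definition mm (T : finType) (M N : T -> T -> C) : T -> T -> C :=
  fun x z => \sum_y M x y * N y z.
Definition herm (T : finType) (M : T -> T -> C) := forall x y, M y x = (M x y)^*.
Definition idm (T : finType) : T -> T -> C := fun x y => (x == y)%:R.
Definition proj (T : finType) (M : T -> T -> C) := herm M /\ mm M M = M.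
Definition tensor (T1 T2 : finType) (M : T1 -> T1 -> C) (N : T2 -> T2 -> C) :
  (T1 * T2)%type -> (T1 * T2)%type -> C := fun x y => M x.1 y.1 * N x.2 y.2.
Definition msum (I T : finType) (F : I -> T -> T -> C) : T -> T -> C :=
  fun x y => \sum_i F i x y.
Definition msc (T : finType) (c : C) (M : T -> T -> C) : T -> T -> C :=
  fun x y => c * M x y.
Definition mzero (T : finType) : T -> T -> C := fun _ _ => 0.

Lemma sum_delta (I : finType) (j : I) (F : I -> C) :
  \sum_i (i == j)%:R * F i = F j.
Proof.
rewrite (bigD1 j) //= eqxx mul1r big1 ?addr0 // => i /negPf ->; by rewrite mul0r.
Qed.

Lemma sum_delta' (I : finType) (j : I) (F : I -> C) :
  \sum_i (j == i)%:R * F i = F j.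
Proof. by under eq_bigr do rewrite eq_sym; apply: sum_delta. Qed.

Variable T : finType.
Implicit Types u v w : T -> C.
Implicit Types M N P : T -> T -> C.

Lemma dot_lin_r u v w (a b : C) :
  dot u (fun x => a * v x + b * w x) = a * dot u v + b * dot u w.
Proof.
rewrite /dot !mulr_sumr -big_split /=; apply: eq_bigr => x _; ring.
Qed.

Lemma dot_lin_l u v w (a b : C) :
  dot (fun x => a * v x + b * w x) u = a^* * dot v u + b^* * dot w u.
Proof.
rewrite /dot !mulr_sumr -big_split /=; apply: eq_bigr => x _.
rewrite rmorphD !rmorphM /=; ring.
Qed.

Lemma dotC u v : dot v u = (dot u v)^*.
Proof.
rewrite /dot rmorph_sum; apply: eq_bigr => x _; rewrite rmorphM /=; by rewrite conjCK mulrC.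
Qed.

Lemma dot_sumr (I : finType) u (F : I -> T -> C) :
  dot u (fun x => \sum_i F i x) = \sum_i dot u (F i).
Proof.
rewrite /dot exchange_big; apply: eq_bigr => x _; by rewrite mulr_sumr.
Qed.

Lemma dot_suml (I : finType) u (F : I -> T -> C) :
  dot (fun x => \sum_i F i x) u = \sum_i dot (F i) u.
Proof.
rewrite dotC dot_sumr rmorph_sum; apply: eq_bigr => i _; symmetry; exact: dotC.
Qed.

Lemma dot_ge0 u : 0 <= dot u u.
Proof. apply: sumr_ge0 => x _; rewrite mulrC; exact: mul_conjC_ge0. Qed.

Lemma dot_real u : (dot u u)^* = dot u u.
Proof. apply: conj_Creal; apply: ger0_real; exact: dot_ge0. Qed.

Lemma dot_eq0 u : dot u u = 0 -> forall x, u x = 0.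
Proof.
move=> /eqP; rewrite psumr_eq0 => [/allP H x|x _].
  have := H x (mem_index_enum x); rewrite /= mulrC mul_conjC_eq0; exact/eqP.
rewrite mulrC; exact: mul_conjC_ge0.
Qed.

Lemma app_mm M N u : app (mm M N) u = app M (app N u).
Proof.
apply: functional_extensionality => x; rewrite /app /mm.
under eq_bigr do rewrite mulr_suml.
rewrite exchange_big; apply: eq_bigr => y _; rewrite mulr_sumr.
apply: eq_bigr => z _; by rewrite mulrA.
Qed.

Lemma mmA M N P : mm (mm M N) P = mm M (mm N P).
Proof.
apply: functional_extensionality => x; apply: functional_extensionality => z.
rewrite /mm. under eq_bigr do rewrite mulr_suml.
rewrite exchange_big; apply: eq_bigr => y _; rewrite mulr_sumr.
apply: eq_bigr => w _; by rewrite mulrA.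
Qed.

Lemma dot_herm M u v : herm M -> dot (app M u) v = dot u (app M v).
Proof.
move=> hM; rewrite /dot /app.
under eq_bigr do rewrite rmorph_sum mulr_suml.
rewrite exchange_big; apply: eq_bigr => y _; rewrite mulr_sumr.
apply: eq_bigr => x _; rewrite rmorphM /= -hM; ring.
Qed.

Lemma app_msum (I : finType) (F : I -> T -> T -> C) u :
  app (msum F) u = fun x => \sum_i app (F i) u x.
Proof.
apply: functional_extensionality => x; rewrite /app /msum.
under eq_bigr do rewrite mulr_suml.
by rewrite exchange_big.
Qed.

Lemma mm_msuml (I : finType) (F : I -> T -> T -> C) N :
  mm (msum F) N = msum (fun i => mm (F i) N).
Proof.
apply: functional_extensionality => x; apply: functional_extensionality => z.
rewrite /mm /msum. under eq_bigr do rewrite mulr_suml.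
by rewrite exchange_big.
Qed.

Lemma mm_msumr (I : finType) (F : I -> T -> T -> C) N :
  mm N (msum F) = msum (fun i => mm N (F i)).
Proof.
apply: functional_extensionality => x; apply: functional_extensionality => z.
rewrite /mm /msum. under eq_bigr do rewrite mulr_sumr.
by rewrite exchange_big.
Qed.

Lemma mm_msc_l c M N : mm (msc c M) N = msc c (mm M N).
Proof.
apply: functional_extensionality => x; apply: functional_extensionality => z.
rewrite /mm /msc mulr_sumr; apply: eq_bigr => y _; by rewrite mulrA.
Qed.

Lemma mm_msc_r c M N : mm M (msc c N) = msc c (mm M N).
Proof.
apply: functional_extensionality => x; apply: functional_extensionality => z.
rewrite /mm /msc mulr_sumr; apply: eq_bigr => y _; ring.
Qed.

Lemma app_msc c M u : app (msc c M) u = fun x => c * app M u x.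
Proof.
apply: functional_extensionality => x; rewrite /app /msc mulr_sumr.
apply: eq_bigr => y _; by rewrite mulrA.
Qed.

Lemma mm_idl M : mm (@idm T) M = M.
Proof.
apply: functional_extensionality => x; apply: functional_extensionality => z.
by rewrite /mm /idm sum_delta'.
Qed.

Lemma mm_idr M : mm M (@idm T) = M.
Proof.
apply: functional_extensionality => x; apply: functional_extensionality => z.
rewrite /mm /idm; under eq_bigr do rewrite mulrC; by rewrite sum_delta.
Qed.

Lemma app_id u : app (@idm T) u = u.
Proof.
apply: functional_extensionality => x; by rewrite /app /idm sum_delta'.
Qed.

Lemma herm_id : herm (@idm T).
Proof. move=> x y; by rewrite /idm eq_sym conjC_nat. Qed.

Lemma herm_msum (I : finType) (F : I -> T -> T -> C) :
  (forall i, herm (F i)) -> herm (msum F).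
Proof.
move=> h x y; rewrite /msum rmorph_sum; apply: eq_bigr => i _; exact: h.
Qed.

Lemma proj_nrm P u : proj P -> dot (app P u) (app P u) = dot u (app P u).
Proof. case=> hh hi; by rewrite dot_herm // -app_mm hi. Qed.

Lemma proj_le P u : proj P -> dot (app P u) (app P u) <= dot u u.
Proof.
move=> hP; have [hh hi] := hP.
have [w ew] : {w : T -> C | w = fun x => 1 * u x + (-1) * app P u x} by eexists.
have hw : dot (app P u) w = 0.
  rewrite ew dot_lin_r proj_nrm // dot_herm //; ring.
have hu : u = fun x => 1 * app P u x + 1 * w x.
  apply: functional_extensionality => x; rewrite ew /=; ring.
have -> : dot u u = dot (app P u) (app P u) + dot w w.
  transitivity (dot (fun x => 1 * app P u x + 1 * w x)
                    (fun x => 1 * app P u x + 1 * w x)); first by rewrite -hu.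
  have hw2 : dot w (app P u) = 0 by rewrite dotC hw conjC0.
  rewrite dot_lin_l !dot_lin_r; move: hw hw2; set b1 := dot (app P u) w; set b2 := dot w (app P u) => -> ->; rewrite rmorph1; ring.
rewrite lerDl; exact: dot_ge0.
Qed.

Lemma CS u v : `|dot u v| ^+ 2 <= dot u u * dot v v.
Proof.
set a := dot u u; set b := dot u v; set V := dot v v.
have a0 : 0 <= a by exact: dot_ge0.
have [az|anz] := eqVneq a 0.
  have u0 := dot_eq0 az.
  have -> : b = 0 by rewrite /b /dot big1 // => x _; rewrite u0 conjC0 mul0r.
  by rewrite normr0 expr0n /= az mul0r.
have apos : 0 < a by rewrite lt_def anz a0.
set w := fun x => a * v x + (- b) * u x.
have := dot_ge0 w.
rewrite {1 2}/w dot_lin_l !dot_lin_r -/a -/b -/V (dotC u v) -/b.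
have -> : a^* = a by apply: conj_Creal; apply: ger0_real.
rewrite normCK.
have -> : a * (a * V + - b * b^*) + (- b)^* * (a * b + - b * a) =
          a * (a * V - b * b^*) by rewrite rmorphN; ring.
by rewrite pmulr_rge0 // subr_ge0.
Qed.

Lemma pvm_mm (I : finType) (P : I -> T -> T -> C) :
  (forall i, proj (P i)) -> msum P = @idm T ->
  forall i j, mm (P i) (P j) = msc (i == j)%:R (P i).
Proof.
move=> hP hs i j.
have [<-|nij] := eqVneq i j.
  by have [_ ->] := hP i; rewrite /msc; apply: functional_extensionality => x;
     apply: functional_extensionality => y; rewrite mul1r.
have key : forall w x, app (P i) (app (P j) w) x = 0.
  move=> w; set z := app (P j) w.
  have hz : dot z z = \sum_k dot (app (P k) z) (app (P k) z).
    have -> : dot z z = dot z (app (msum P) z) by rewrite hs app_id.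
    rewrite app_msum dot_sumr; apply: eq_bigr => k _; by rewrite proj_nrm.
  have pz : app (P j) z = z by rewrite /z -app_mm; have [_ ->] := hP j.
  rewrite (bigD1 j) //= pz in hz.
  have : \sum_(k | k != j) dot (app (P k) z) (app (P k) z) = 0.
    by apply: (@addrI _ (dot z z)); rewrite addr0 -hz.
  move=> /eqP; rewrite psumr_eq0 => [/allP H|k _]; last exact: dot_ge0.
  have := H i (mem_index_enum i); rewrite nij /= => /eqP /dot_eq0; exact.
apply: functional_extensionality => x; apply: functional_extensionality => y.
rewrite /msc mul0r.
have := key (fun z => (z == y)%:R) x.
rewrite -app_mm /app /mm; under eq_bigr do rewrite mulrC; by rewrite sum_delta.
Qed.

End Lin.

Section Tensor.
Variable C : numClosedFieldType.
Variables T1 T2 : finType.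
Implicit Types M : T1 -> T1 -> C.
Implicit Types N : T2 -> T2 -> C.

Lemma sum_pair (F : (T1 * T2)%type -> C) :
  \sum_p F p = \sum_a \sum_b F (a, b).
Proof. by rewrite pair_bigA; apply: eq_bigr => -[]. Qed.

Lemma mm_tensor M M' N N' :
  mm (tensor M N) (tensor M' N') = tensor (mm M M') (mm N N').
Proof.
apply: functional_extensionality => x; apply: functional_extensionality => z.
rewrite /mm /tensor sum_pair /= mulr_suml; apply: eq_bigr => a _.
rewrite mulr_sumr; apply: eq_bigr => b _ /=; ring.
Qed.

Lemma herm_tensor M N : herm M -> herm N -> herm (tensor M N).
Proof. move=> hM hN x y; by rewrite /tensor rmorphM /= -hM -hN. Qed.

Lemma tensor_msc_l c M N : tensor (msc c M) N = msc c (tensor M N).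
Proof.
apply: functional_extensionality => x; apply: functional_extensionality => z.
by rewrite /tensor /msc mulrA.
Qed.

Lemma tensor_msc_r c M N : tensor M (msc c N) = msc c (tensor M N).
Proof.
apply: functional_extensionality => x; apply: functional_extensionality => z.
rewrite /tensor /msc; ring.
Qed.

Lemma tensor_msum_l (I : finType) (F : I -> T1 -> T1 -> C) N :
  tensor (msum F) N = msum (fun i => tensor (F i) N).
Proof.
apply: functional_extensionality => x; apply: functional_extensionality => z.
by rewrite /tensor /msum mulr_suml.
Qed.

Lemma tensor_msum_r (I : finType) (F : I -> T2 -> T2 -> C) M :
  tensor M (msum F) = msum (fun i => tensor M (F i)).
Proof.
apply: functional_extensionality => x; apply: functional_extensionality => z.
by rewrite /tensor /msum mulr_sumr.
Qed.

Lemma idm_pair : @idm C (T1 * T2)%type = tensor (@idm C T1) (@idm C T2).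
Proof.
apply: functional_extensionality => x; apply: functional_extensionality => z.
case: x => x1 x2; case: z => z1 z2; by rewrite /idm /tensor xpair_eqE /=; case: (x1 == z1); rewrite ?mul1r ?mul0r.
Qed.

Lemma proj_tensor M N : proj M -> proj N -> proj (tensor M N).
Proof.
move=> [hM iM] [hN iN]; split; first exact: herm_tensor.
by rewrite mm_tensor iM iN.
Qed.

Lemma dot_pair (u v : (T1 * T2)%type -> C) :
  dot u v = \sum_b dot (fun a => u (a, b)) (fun a => v (a, b)).
Proof. by rewrite /dot sum_pair exchange_big. Qed.

Lemma bound_tensor_id M (c2 : C) :
  (forall w, dot (app M w) (app M w) <= c2 * dot w w) ->
  forall z, dot (app (tensor M (@idm C T2)) z) (app (tensor M (@idm C T2)) z)
            <= c2 * dot z z.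
Proof.
move=> hM z.
have e : forall b, (fun a => app (tensor M (@idm C T2)) z (a, b)) =
                   app M (fun a => z (a, b)).
  move=> b; apply: functional_extensionality => a.
  rewrite /app /tensor sum_pair /=; apply: eq_bigr => a' _.
  rewrite /idm (bigD1 b) //= big1 ?addr0; first by rewrite eqxx mulr1.
  by move=> b' /negPf; rewrite eq_sym => ->; rewrite mulr0 mul0r.
rewrite !(dot_pair (app _ _)) dot_pair mulr_sumr; apply: ler_sum => b _.
rewrite e; exact: hM.
Qed.

End Tensor.

Section Tens.
Variable C : numClosedFieldType.
Variables (n : nat) (Q : finType).
Definition tens (L : 'I_n -> Q -> Q -> C) : {ffun 'I_n -> Q} -> {ffun 'I_n -> Q} -> C :=
  fun a a' => \prod_j L j (a j) (a' j).

Lemma mm_tens (L M : 'I_n -> Q -> Q -> C) :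
  mm (tens L) (tens M) = tens (fun j => mm (L j) (M j)).
Proof.
apply: functional_extensionality => a; apply: functional_extensionality => a'.
rewrite /mm /tens /=.
under eq_bigr do rewrite -big_split /=.
by rewrite bigA_distr_bigA.
Qed.

Lemma herm_tens (L : 'I_n -> Q -> Q -> C) : (forall j, herm (L j)) -> herm (tens L).
Proof.
move=> h a a'; rewrite /tens rmorph_prod; apply: eq_bigr => j _; exact: h.
Qed.

Lemma tens_msc (c : 'I_n -> C) (L : 'I_n -> Q -> Q -> C) :
  tens (fun j => msc (c j) (L j)) = msc (\prod_j c j) (tens L).
Proof.
apply: functional_extensionality => a; apply: functional_extensionality => a'.
by rewrite /tens /msc -big_split.
Qed.

Lemma proj_tens (L : 'I_n -> Q -> Q -> C) : (forall j, proj (L j)) -> proj (tens L).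
Proof.
move=> h; split; first by apply: herm_tens => j; case: (h j).
rewrite mm_tens; congr tens; apply: functional_extensionality => j; by case: (h j).
Qed.

Lemma prod_delta (T : finType) (a b : {ffun 'I_n -> T}) :
  \prod_j ((a j == b j)%:R : C) = (a == b)%:R.
Proof.
have [->|nab] := eqVneq a b; first by rewrite big1 // => j _; rewrite eqxx.
have [j hj] : exists j, a j != b j.
  apply/existsP; apply: contraT; rewrite negb_exists => /forallP H.
  case/eqP: nab; apply/ffunP => j; exact/eqP/negbNE/H.
by rewrite (bigD1 j) //= (negPf hj) mul0r.
Qed.

End Tens.

Section Abstract.
Variable C : numClosedFieldType.

Lemma dot_scale_r (T : finType) (u v : T -> C) c :
  dot u (fun x => c * v x) = c * dot u v.
Proof. by rewrite /dot mulr_sumr; apply: eq_bigr => x _; rewrite mulrCA. Qed.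

Lemma bound_blocks (T1 T2 I : finType) (M : I -> T1 -> T1 -> C)
  (K : I -> T2 -> T2 -> C) (c2 : C) : 0 <= c2 ->
  (forall i, proj (K i)) ->
  (forall i j, mm (K i) (K j) = msc (i == j)%:R (K i)) ->
  msum K = @idm C T2 ->
  (forall i w, dot (app (M i) w) (app (M i) w) <= c2 * dot w w) ->
  forall z, dot (app (msum (fun i => tensor (M i) (K i))) z)
                (app (msum (fun i => tensor (M i) (K i))) z) <= c2 * dot z z.
Proof.
move=> c20 hK hKK hKs hM z.
set y := fun i => app (tensor (M i) (K i)) z.
have hy : app (msum (fun i => tensor (M i) (K i))) z = fun x => \sum_i y i x.
  by rewrite app_msum.
have ht1 : forall i, tensor (M i) (K i) =
    mm (tensor (@idm C T1) (K i)) (tensor (M i) (@idm C T2)).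
  by move=> i; rewrite mm_tensor mm_idl mm_idr.
have ht2 : forall i, tensor (M i) (K i) =
    mm (tensor (M i) (@idm C T2)) (tensor (@idm C T1) (K i)).
  by move=> i; rewrite mm_tensor mm_idl mm_idr.
have hP : forall i, proj (tensor (@idm C T1) (K i)).
  move=> i; apply: proj_tensor => //; split; [exact: herm_id | exact: mm_idl].
have orth : forall i j, dot (y i) (y j) = (j == i)%:R * dot (y i) (y i).
  move=> i j; have [->|nij] := eqVneq j i; first by rewrite mul1r.
  rewrite mul0r /y !ht1 !app_mm dot_herm; last by case: (hP i).
  rewrite -app_mm mm_tensor mm_idl hKK eq_sym (negPf nij).
  have -> : msc 0 (K i) = @mzero C T2.
    by apply: functional_extensionality => a; apply: functional_extensionality => b;
       rewrite /msc mul0r.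
  rewrite /dot big1 // => x _.
  rewrite [X in _ * X]/app big1 ?mulr0 // => w _.
  by rewrite /tensor /mzero mulr0 mul0r.
rewrite hy dot_suml.
under eq_bigr do rewrite dot_sumr.
under eq_bigr do under eq_bigr do rewrite orth.
under eq_bigr do rewrite sum_delta.
set zK := fun i => app (tensor (@idm C T1) (K i)) z.
have e1 : forall i, y i = app (tensor (M i) (@idm C T2)) (zK i).
  by move=> i; rewrite /y ht2 app_mm.
apply: (@le_trans _ _ (\sum_i c2 * dot (zK i) (zK i))).
  apply: ler_sum => i _; rewrite e1; exact: bound_tensor_id.
rewrite -mulr_sumr; apply: ler_wpM2l => //.
have -> : \sum_i dot (zK i) (zK i) = dot z (app (msum (fun i => tensor (@idm C T1) (K i))) z).
  rewrite app_msum dot_sumr; apply: eq_bigr => i _; by rewrite /zK proj_nrm.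
by rewrite -tensor_msum_r hKs -idm_pair app_id.
Qed.

Lemma sqr_bound (z a b c : C) : 0 <= a -> 0 <= b -> 0 <= c ->
  `|z| ^+ 2 <= c ^+ 2 * a * b -> `|z| <= c * (a + b) / 2.
Proof.
move=> a0 b0 c0 h.
have h2 : 0 <= c * (a + b) / 2 by rewrite divr_ge0 // mulr_ge0 // addr_ge0.
rewrite -ler_sqr ?nnegrE //; apply: (le_trans h).
have -> : (c * (a + b) / 2) ^+ 2 = c ^+ 2 * a * b + c ^+ 2 * ((a - b) / 2) ^+ 2.
  rewrite !expr2; field.
  by [].
rewrite lerDl mulr_ge0 //; first exact: exprn_ge0.
rewrite -realEsqr; apply: rpredM.
  by apply: rpredB; apply: ger0_real.
by rewrite rpredV realn.
Qed.

Lemma sum_proj_bound (T I : finType) (P : I -> T -> T -> C) (c : I -> I -> C)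
  (Cc : C) (phi : T -> C) :
  (forall s, proj (P s)) -> 0 <= Cc ->
  (forall s t, 0 <= c s t) -> (forall s t, c s t = c t s) ->
  (forall s, \sum_t c s t = Cc) ->
  (forall s t, `|dot (app (P s) phi) (app (P t) phi)| ^+ 2 <=
      c s t ^+ 2 * dot (app (P s) phi) (app (P s) phi) *
      dot (app (P t) phi) (app (P t) phi)) ->
  \sum_s dot phi (app (P s) phi) <= Cc * dot phi phi.
Proof.
move=> hP C0 c0 csym cs hb.
set N := fun s => dot (app (P s) phi) (app (P s) phi).
have N0 : forall s, 0 <= N s by move=> s; exact: dot_ge0.
have -> : \sum_s dot phi (app (P s) phi) = \sum_s N s.
  by apply: eq_bigr => s _; rewrite /N proj_nrm.
set S := \sum_s N s.
have S0 : 0 <= S by apply: sumr_ge0.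
set g := fun x => \sum_s app (P s) phi x.
have hg : dot phi g = S.
  by rewrite /g dot_sumr; apply: eq_bigr => s _; rewrite /N proj_nrm.
have h1 : S ^+ 2 <= dot phi phi * dot g g.
  by have := CS phi g; rewrite hg ger0_norm.
have h2 : dot g g <= Cc * S.
  rewrite -[dot g g]ger0_norm; last exact: dot_ge0.
  rewrite /g dot_suml.
  apply: (le_trans (ler_norm_sum _ _ _)).
  under eq_bigr do rewrite dot_sumr.
  apply: (@le_trans _ _ (\sum_s \sum_t c s t * (N s + N t) / 2)).
    apply: ler_sum => s _; apply: (le_trans (ler_norm_sum _ _ _)).
    apply: ler_sum => t _; apply: sqr_bound => //; exact: hb.
  have -> : \sum_s \sum_t c s t * (N s + N t) / 2 =
    \sum_s \sum_t (c s t * N s / 2) + \sum_s \sum_t (c t s * N t / 2).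
    rewrite -big_split; apply: eq_bigr => s _; rewrite -big_split.
    apply: eq_bigr => t _ /=; rewrite (csym t s); ring.
  rewrite [X in _ + X]exchange_big /=.
  have eX : \sum_s \sum_t c s t * N s / 2 = Cc * S / 2.
    rewrite /S mulr_sumr mulr_suml; apply: eq_bigr => s _.
    by rewrite -!mulr_suml cs.
  by rewrite eX -splitr.
have [S00|Spos] := eqVneq S 0.
  by rewrite S00 mulr_ge0 // dot_ge0.
have Sp : 0 < S by rewrite lt_def Spos S0.
rewrite -(ler_pM2r Sp) -expr2; apply: (le_trans h1).
apply: (le_trans (ler_wpM2l (dot_ge0 phi) h2)); by rewrite mulrCA mulrA.
Qed.

End Abstract.

End GenM.
Import GenM.

Module LocalM.
Set Implicit Arguments. Unset Strict Implicit. Unset Printing Implicit Defensive.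
Local Open Scope ring_scope.
Local Open Scope complex_scope.

Section Local.
Variable R : realType.
Local Notation C := R[i].

Definition hc : C := ((Num.sqrt (2 : R))^-1)%:C.

Lemma conjR (x : R) : (x%:C)^*%R = x%:C :> C.
Proof. apply: conj_Creal; apply/complex_realP; by exists x. Qed.

Lemma hc2 : hc * hc = 2^-1.
Proof.
rewrite /hc -rmorphM -invfM -expr2 sqr_sqrtr ?ler0n //.
by rewrite fmorphV rmorph_nat.
Qed.

Lemma hcM (a b : C) : hc * a * (hc * b) = 2^-1 * (a * b).
Proof. by rewrite -hc2; ring. Qed.


Definition vb (th e x : bool) : C := if th then ket_hat R e x else ket_comp R e x.

Lemma vb_real th e x : (vb th e x)^*%R = vb th e x.
Proof.
rewrite /vb /ket_hat /ket_comp; case: th.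
  rewrite rmorphM /= conjR; case: x => //=; last by rewrite rmorph1.
  by case: e; rewrite ?expr1 ?expr0 ?rmorphN rmorph1.
by rewrite conjC_nat.
Qed.

Definition P2 (th e : bool) : bool -> bool -> C := fun x y => vb th e x * vb th e y.

Lemma inner th e e' : \sum_z vb th e z * vb th e' z = (e == e')%:R.
Proof.
rewrite big_bool /vb /ket_hat /ket_comp.
case: th; case: e; case: e' => /=; rewrite ?hcM ?expr1 ?expr0;
  rewrite ?mulr1 ?mulr0 ?mul0r ?add0r ?addr0 ?mulrNN ?mulr1 ?mulN1r ?mulrN1 ?opprK //;
  try field; try (by rewrite pnatr_eq0); ring.
Qed.

Lemma msc1 (T : finType) (M : T -> T -> C) : msc 1 M = M.
Proof.
apply: functional_extensionality => x; apply: functional_extensionality => y.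
by rewrite /msc mul1r.
Qed.

Lemma herm_P2 th e : herm (P2 th e).
Proof. move=> x y; by rewrite /P2 rmorphM /= !vb_real mulrC. Qed.

Lemma mm_P2 th e e' : mm (P2 th e) (P2 th e') = msc (e == e')%:R (P2 th e).
Proof.
apply: functional_extensionality => x; apply: functional_extensionality => z.
rewrite /mm /P2 /msc.
transitivity (vb th e x * (\sum_y vb th e y * vb th e' y) * vb th e' z).
  rewrite mulr_sumr mulr_suml; apply: eq_bigr => y _; ring.
rewrite inner; case: (eqVneq e e') => [->|_] /=; ring.
Qed.

Lemma proj_P2 th e : proj (P2 th e).
Proof. split; first exact: herm_P2. by rewrite mm_P2 eqxx msc1. Qed.

Lemma ovl th e f :
  (\sum_y vb (~~ th) f y * vb th e y) * (\sum_w vb th e w * vb (~~ th) f w) = 2^-1.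
Proof.
rewrite !big_bool /vb /ket_hat /ket_comp -/hc.
case: th; case: e; case: f => /=; rewrite ?expr1 ?expr0;
  rewrite ?mulr1 ?mulr0 ?mul0r ?add0r ?addr0 ?mulrNN ?mulr1 ?mulN1r ?mulrN1 ?opprK;
  rewrite ?mulrNN ?mulrN ?mulNr ?opprK ?mul1r ?mulr1 ?hc2 //.
Qed.

Lemma mm_P2_ovl th e f :
  mm (P2 (~~ th) f) (mm (P2 th e) (P2 (~~ th) f)) = msc 2^-1 (P2 (~~ th) f).
Proof.
apply: functional_extensionality => x; apply: functional_extensionality => z.
rewrite /mm /P2 /msc -(ovl th e f).
set K := \sum_w vb th e w * vb (~~ th) f w.
have i2 : forall y, \sum_w vb th e y * vb th e w * (vb (~~ th) f w * vb (~~ th) f z)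
                  = vb th e y * K * vb (~~ th) f z.
  by move=> y; rewrite /K mulr_sumr mulr_suml; apply: eq_bigr => w _; ring.
under eq_bigr do rewrite i2.
rewrite !mulr_suml; apply: eq_bigr => y _; ring.
Qed.

Lemma P2_idem th e : mm (P2 th e) (P2 th e) = P2 th e.
Proof. by rewrite mm_P2 eqxx msc1. Qed.

Lemma proj_idm (T : finType) : proj (@idm C T).
Proof. split; [exact: herm_id | exact: mm_idl]. Qed.

Lemma msc_msc (T : finType) a b (M : T -> T -> C) : msc a (msc b M) = msc (a * b) M.
Proof.
apply: functional_extensionality => x; apply: functional_extensionality => y.
by rewrite /msc mulrA.
Qed.

Definition lp (th k e : bool) : (bool * bool)%type -> (bool * bool)%type -> C :=
  if k then tensor (@idm C bool) (P2 th e) else tensor (P2 th e) (@idm C bool).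

Definition lpsi (s r0 r1 : bool) : (bool * bool)%type -> (bool * bool)%type -> C :=
  if s then tensor (P2 true r1) (P2 false r0) else tensor (P2 false r0) (P2 true r1).

Lemma proj_lp th k e : proj (lp th k e).
Proof. rewrite /lp; case: k; apply: proj_tensor; (exact: proj_idm || exact: proj_P2). Qed.

Lemma proj_lpsi s r0 r1 : proj (lpsi s r0 r1).
Proof. rewrite /lpsi; case: s; apply: proj_tensor; exact: proj_P2. Qed.

Lemma lp_psi th s r0 r1 :
  mm (lp th (s (+) th) (if th then r1 else r0)) (lpsi s r0 r1) = lpsi s r0 r1.
Proof.
by rewrite /lp /lpsi; case: th; case: s => /=; rewrite mm_tensor ?mm_idl ?mm_idr ?P2_idem.
Qed.

Lemma lpsi_mm s r0 r1 r0' r1' :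
  mm (lpsi s r0 r1) (lpsi s r0' r1') =
  msc ((r0 == r0') && (r1 == r1'))%:R (lpsi s r0 r1).
Proof.
rewrite /lpsi; case: s; rewrite mm_tensor !mm_P2 tensor_msc_l tensor_msc_r msc_msc;
  congr msc; by case: (r0 == r0'); case: (r1 == r1'); rewrite /= ?mulr1 ?mulr0 ?mul0r.
Qed.

Definition Dloc (th k e k' f : bool) :=
  if k == k' then lp (~~ th) k' f else mm (lp (~~ th) k' f) (lp th k e).

Lemma cac th k e k' f :
  mm (lp (~~ th) k' f) (mm (lp th k e) (lp (~~ th) k' f)) =
    msc (if k == k' then 2^-1 else 1) (Dloc th k e k' f) /\
  proj (Dloc th k e k' f).
Proof.
rewrite /Dloc /lp; case: k; case: k' => /=; rewrite !mm_tensor ?mm_idl ?mm_idr ?P2_idem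
  ?mm_P2_ovl ?tensor_msc_l ?tensor_msc_r ?msc1; split => //;
  apply: proj_tensor; (exact: proj_idm || exact: proj_P2).
Qed.

Section Glob.
Variable n : nat.

Definition AuxM (s : bits n) (th : bool) (e : bits n) :=
  tens (fun j => lp th (s j (+) th) (e j)).
Definition Pr (s r0 r1 : bits n) := tens (fun j => lpsi (s j) (r0 j) (r1 j)).

Lemma proj_AuxM s th e : proj (AuxM s th e).
Proof. apply: proj_tens => j; exact: proj_lp. Qed.

Lemma proj_Pr s r0 r1 : proj (Pr s r0 r1).
Proof. apply: proj_tens => j; exact: proj_lpsi. Qed.

Lemma AuxM_Pr s th r0 r1 :
  mm (AuxM s th (if th then r1 else r0)) (Pr s r0 r1) = Pr s r0 r1.
Proof.
rewrite /AuxM /Pr mm_tens; congr tens; apply: functional_extensionality => j.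
have -> : (if th then r1 else r0) j = if th then r1 j else r0 j by case: th.
exact: lp_psi.
Qed.

Lemma natr_andb (a b : bool) : ((a && b)%:R : C) = a%:R * b%:R.
Proof. by case: a; case: b; rewrite /= ?mulr1 ?mulr0. Qed.

Lemma Pr_mm s r0 r1 r0' r1' :
  mm (Pr s r0 r1) (Pr s r0' r1') = msc ((r0 == r0') && (r1 == r1'))%:R (Pr s r0 r1).
Proof.
rewrite /Pr mm_tens.
have -> : (fun j => mm (lpsi (s j) (r0 j) (r1 j)) (lpsi (s j) (r0' j) (r1' j))) =
  (fun j => msc ((r0 j == r0' j) && (r1 j == r1' j))%:R (lpsi (s j) (r0 j) (r1 j))).
  by apply: functional_extensionality => j; rewrite lpsi_mm.
rewrite tens_msc; congr msc.
under eq_bigr do rewrite natr_andb.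
by rewrite big_split /= !prod_delta natr_andb.
Qed.

Lemma Pr_Psi s r0 r1 a a' :
  Pr s r0 r1 a a' = Psi R s r0 r1 a * Psi R s r0 r1 a'.
Proof.
rewrite /Pr /tens /Psi -big_split; apply: eq_bigr => j _ /=.
rewrite /lpsi /psi /tensor /P2 /vb; case: (s j); ring.
Qed.

Definition cst (s t : bits n) : C := \prod_j (if s j == t j then 1 else hc).

Lemma CAC_AuxM s t th e f :
  mm (AuxM t (~~ th) f) (mm (AuxM s th e) (AuxM t (~~ th) f)) =
    msc (cst s t ^+ 2) (tens (fun j => Dloc th (s j (+) th) (e j) (t j (+) ~~ th) (f j)))
  /\ proj (tens (fun j => Dloc th (s j (+) th) (e j) (t j (+) ~~ th) (f j))).
Proof.
split; last by apply: proj_tens => j; case: (cac th (s j (+) th) (e j) (t j (+) ~~ th) (f j)).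
rewrite /AuxM !mm_tens.
have -> : (fun j => mm (lp (~~ th) (t j (+) ~~ th) (f j))
             (mm (lp th (s j (+) th) (e j)) (lp (~~ th) (t j (+) ~~ th) (f j)))) =
  (fun j => msc (if (s j (+) th) == (t j (+) ~~ th) then 2^-1 else 1)
       (Dloc th (s j (+) th) (e j) (t j (+) ~~ th) (f j))).
  by apply: functional_extensionality => j; rewrite (cac _ _ _ _ _).1.
rewrite tens_msc; congr msc.
rewrite /cst expr2 -big_split; apply: eq_bigr => j _.
by case: (s j); case: (t j); case: th; rewrite /= ?mulr1 // hc2.
Qed.

End Glob.

End Local.

End LocalM.
Import LocalM.

Module MainM.
Set Implicit Arguments. Unset Strict Implicit. Unset Printing Implicit Defensive.
Local Open Scope ring_scope.

Section Helpers.
Variable C : numClosedFieldType.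

Lemma mm_msum_keyed (I J T : finType) (G : J -> T -> T -> C) (F : I -> T -> T -> C)
  (key : I -> J) :
  (forall j i, mm (G j) (F i) = msc (j == key i)%:R (F i)) ->
  mm (msum G) (msum F) = msum F.
Proof.
move=> h; rewrite mm_msuml.
apply: functional_extensionality => x; apply: functional_extensionality => y.
rewrite /msum; under eq_bigr do rewrite mm_msumr /msum.
rewrite exchange_big; apply: eq_bigr => i _.
under eq_bigr do rewrite h /msc.
by rewrite sum_delta.
Qed.

Lemma proj_msum_orth (I T : finType) (F : I -> T -> T -> C) :
  (forall i, herm (F i)) ->
  (forall j i, mm (F j) (F i) = msc (j == i)%:R (F i)) -> proj (msum F).
Proof.
move=> hh ho; split; first exact: herm_msum.
exact: (@mm_msum_keyed _ _ _ _ _ id).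
Qed.


Lemma msc0 (T : finType) (M : T -> T -> C) : msc 0 M = @mzero C T.
Proof.
apply: functional_extensionality => x; apply: functional_extensionality => y.
by rewrite /msc mul0r.
Qed.

Lemma tensor0l (T1 T2 : finType) (N : T2 -> T2 -> C) :
  tensor (@mzero C T1) N = @mzero C (T1 * T2)%type.
Proof.
apply: functional_extensionality => x; apply: functional_extensionality => y.
by rewrite /tensor /mzero mul0r.
Qed.

Lemma tensor0r (T1 T2 : finType) (M : T1 -> T1 -> C) :
  tensor M (@mzero C T2) = @mzero C (T1 * T2)%type.
Proof.
apply: functional_extensionality => x; apply: functional_extensionality => y.
by rewrite /tensor /mzero mulr0.
Qed.

Lemma msc_zero (T : finType) c : msc c (@mzero C T) = @mzero C T.
Proof.
apply: functional_extensionality => x; apply: functional_extensionality => y.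
by rewrite /msc /mzero mulr0.
Qed.

Lemma dot_rank1 (T1 T2 : finType) (v : T1 -> C) (K : T2 -> T2 -> C)
  (phi : (T1 * T2)%type -> C) : (forall a, (v a)^* = v a) ->
  dot phi (app (tensor (fun a a' => v a * v a') K) phi) =
  \sum_b \sum_c (\sum_a v a * phi (a, b))^* * K b c * (\sum_a v a * phi (a, c)).
Proof.
move=> hv.
rewrite /dot /app sum_pair.
under eq_bigr do under eq_bigr do rewrite sum_pair mulr_sumr.
under eq_bigr do under eq_bigr do under eq_bigr do rewrite mulr_sumr.
rewrite exchange_big; apply: eq_bigr => b _.
under eq_bigr do rewrite exchange_big.
rewrite exchange_big; apply: eq_bigr => c _.
rewrite rmorph_sum !mulr_suml; apply: eq_bigr => a _.
rewrite mulr_sumr; apply: eq_bigr => a' _.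
rewrite /tensor /= rmorphM /= hv; ring.
Qed.

End Helpers.

Lemma pvm_of (R : realType) (I T : finType) (P : I -> T -> T -> R[i]) :
  is_proj_meas P -> (forall i, proj (P i)) /\ msum P = @idm _ T.
Proof.
case=> hh [hi hs]; split.
  move=> i; split; first by move=> x y; exact: hh.
  apply: functional_extensionality => x; apply: functional_extensionality => y; exact: hi.
apply: functional_extensionality => x; apply: functional_extensionality => y; exact: hs.
Qed.

Section Main.
Variable R : realType.
Local Notation C := R[i].
Variables (n dE d0 d1 d' : nat) (chi : 'I_dE -> C)
  (U : 'I_d0 * 'I_d1 * 'I_d' -> Abasis n * 'I_dE -> C)
  (Rm : bool -> 'I_d' -> 'I_d' -> C)
  (Pi0 : bits n -> bool -> bits n -> 'I_d0 -> 'I_d0 -> C)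
  (Pi1 : bits n -> bool -> bits n -> 'I_d1 -> 'I_d1 -> C).
Hypotheses (hchi : is_unit_vector chi) (hU : is_unitary_op U)
  (hR : is_proj_meas Rm) (h0 : forall s b', is_proj_meas (Pi0 s b'))
  (h1 : forall s b', is_proj_meas (Pi1 s b')).

Local Notation Ab := (Abasis n).
Local Notation Bb := ('I_d0 * 'I_d1 * 'I_d')%type.
Local Notation Pr := (Pr R).
Local Notation AuxM := (AuxM R).
Local Notation cst := (cst R).
Local Notation hc := (hc R).

Let hRp b : proj (Rm b). Proof. exact: (pvm_of hR).1. Qed.
Let hRs : msum Rm = @idm _ _. Proof. exact: (pvm_of hR).2. Qed.
Let h0p s b e : proj (Pi0 s b e). Proof. exact: (pvm_of (h0 s b)).1. Qed.
Let h0s s b : msum (Pi0 s b) = @idm _ _. Proof. exact: (pvm_of (h0 s b)).2. Qed.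
Let h1p s b e : proj (Pi1 s b e). Proof. exact: (pvm_of (h1 s b)).1. Qed.
Let h1s s b : msum (Pi1 s b) = @idm _ _. Proof. exact: (pvm_of (h1 s b)).2. Qed.

Let Ridem b : mm (Rm b) (Rm b) = Rm b. Proof. by case: (hRp b). Qed.
Let P0idem s b e : mm (Pi0 s b e) (Pi0 s b e) = Pi0 s b e. Proof. by case: (h0p s b e). Qed.
Let P1idem s b e : mm (Pi1 s b e) (Pi1 s b e) = Pi1 s b e. Proof. by case: (h1p s b e). Qed.

Definition phi : (Ab * Bb)%type -> C := fun x => \sum_e U x.2 (x.1, e) * chi e.

Definition Kb (s : bits n) (b : bool) (r0 r1 : bits n) : Bb -> Bb -> C :=
  tensor (tensor (Pi0 s b (if b then r1 else r0)) (Pi1 s b (if b then r0 else r1))) (Rm b).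

Definition TT (s : bits n) (i : bits n * bits n * bool) :=
  tensor (Pr s i.1.1 i.1.2) (Kb s i.2 i.1.1 i.1.2).

Definition Pis s := msum (TT s).

Lemma TT_orth s j i : mm (TT s j) (TT s i) = msc (j == i)%:R (TT s i).
Proof.
case: j => [[r0 r1] b]; case: i => [[r0' r1'] b2].
rewrite /TT /Kb /= mm_tensor Pr_mm !mm_tensor !xpair_eqE.
have [<-|n0] := eqVneq r0 r0'; last by rewrite /= !msc0 tensor0l.
have [<-|n1] := eqVneq r1 r1'; last by rewrite /= !msc0 tensor0l.
rewrite /= msc1 (pvm_mm hRp hRs).
case: (eqVneq b b2) => [<-|nb] /=; last by rewrite !msc0 !tensor0r.
by rewrite !msc1 P0idem P1idem.
Qed.

Lemma proj_Pis s : proj (Pis s).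
Proof.
apply: proj_msum_orth; last exact: TT_orth.
move=> i; apply: herm_tensor; first by case: (proj_Pr R s i.1.1 i.1.2).
apply: herm_tensor; last by case: (hRp i.2).
by apply: herm_tensor; [case: (h0p s i.2 (if i.2 then i.1.2 else i.1.1)) |
                        case: (h1p s i.2 (if i.2 then i.1.1 else i.1.2))].
Qed.

Definition XT s (k : bool * bits n) :=
  tensor (AuxM s k.1 k.2) (tensor (tensor (Pi0 s k.1 k.2) (@idm C 'I_d1)) (Rm k.1)).
Definition YT t (k : bool * bits n) :=
  tensor (AuxM t (~~ k.1) k.2) (tensor (tensor (@idm C 'I_d0) (Pi1 t k.1 k.2)) (Rm k.1)).

Lemma XT_TT s k i :
  mm (XT s k) (TT s i) = msc (k == (i.2, if i.2 then i.1.2 else i.1.1))%:R (TT s i).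
Proof.
case: k => b2 e; case: i => [[r0 r1] b].
rewrite /XT /TT /Kb /= !mm_tensor !xpair_eqE (pvm_mm hRp hRs).
case: (eqVneq b2 b) => [<-|nb] /=; last by rewrite !msc0 !tensor0r ?msc_zero.
rewrite (pvm_mm (h0p s b2) (h0s s b2)) mm_idl msc1.
case: (eqVneq e (if b2 then r1 else r0)) => [->|ne] /=; last by rewrite !msc0 ?tensor0l ?tensor0r ?tensor0l ?tensor0r ?msc_zero.
by rewrite !msc1 AuxM_Pr.
Qed.

Lemma YT_TT t k i :
  mm (YT t k) (TT t i) = msc (k == (i.2, if i.2 then i.1.1 else i.1.2))%:R (TT t i).
Proof.
case: k => b2 f; case: i => [[r0 r1] b].
rewrite /YT /TT /Kb /= !mm_tensor !xpair_eqE (pvm_mm hRp hRs).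
case: (eqVneq b2 b) => [<-|nb] /=; last by rewrite !msc0 !tensor0r ?msc_zero.
rewrite (pvm_mm (h1p t b2) (h1s t b2)) mm_idl msc1.
case: (eqVneq f (if b2 then r0 else r1)) => [->|ne] /=; last by rewrite !msc0 ?tensor0l ?tensor0r ?tensor0l ?tensor0r ?msc_zero.
rewrite !msc1.
have -> : (if b2 then r0 else r1) = (if ~~ b2 then r1 else r0) by case: b2.
by rewrite AuxM_Pr.
Qed.

Lemma X_Pis s : mm (msum (XT s)) (Pis s) = Pis s.
Proof. exact: (mm_msum_keyed (XT_TT s)). Qed.

Lemma Y_Pis t : mm (msum (YT t)) (Pis t) = Pis t.
Proof. exact: (mm_msum_keyed (YT_TT t)). Qed.

Lemma herm_X s : herm (msum (XT s)).
Proof.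
apply: herm_msum => k; apply: herm_tensor; first by case: (proj_AuxM R s k.1 k.2).
apply: herm_tensor; last by case: (hRp k.1).
apply: herm_tensor; [by case: (h0p s k.1 k.2) | exact: herm_id].
Qed.

Lemma hc_ge0 : 0 <= hc.
Proof. by rewrite /LocalM.hc ler0c invr_ge0 sqrtr_ge0. Qed.

Lemma cst_ge0 (s t : bits n) : 0 <= cst s t.
Proof. apply: prodr_ge0 => j _; case: ifP => _ //; exact: hc_ge0. Qed.

Lemma bound_AC (s t : bits n) b (e f : bits n) (w : Ab -> C) :
  dot (app (mm (AuxM s b e) (AuxM t (~~ b) f)) w)
      (app (mm (AuxM s b e) (AuxM t (~~ b) f)) w) <= cst s t ^+ 2 * dot w w.
Proof.
have [eC pD] := CAC_AuxM R s t b e f.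
set D := tens _ in eC pD.
have hC : herm (AuxM t (~~ b) f) by case: (proj_AuxM R t (~~ b) f).
rewrite app_mm proj_nrm; last exact: proj_AuxM.
rewrite (dot_herm _ _ hC) -!app_mm mmA eC app_msc dot_scale_r -proj_nrm //.
apply: ler_wpM2l; first by apply: exprn_ge0; apply: cst_ge0.
exact: proj_le.
Qed.

Definition KK s t (i : bool * bits n * bits n) :=
  tensor (tensor (Pi0 s i.1.1 i.1.2) (Pi1 t i.1.1 i.2)) (Rm i.1.1).

Lemma XY s t : mm (msum (XT s)) (msum (YT t)) =
  msum (fun i => tensor (mm (AuxM s i.1.1 i.1.2) (AuxM t (~~ i.1.1) i.2)) (KK s t i)).
Proof.
have h : forall k k', mm (XT s k) (YT t k') = msc (k.1 == k'.1)%:R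
   (tensor (mm (AuxM s k.1 k.2) (AuxM t (~~ k'.1) k'.2)) (KK s t (k.1, k.2, k'.2))).
  case=> b e [b2 f]; rewrite /XT /YT /KK /= !mm_tensor mm_idl mm_idr (pvm_mm hRp hRs).
  case: (eqVneq b b2) => [<-|nb] /=; first by rewrite !msc1.
  by rewrite !msc0 ?tensor0r ?msc_zero.
rewrite mm_msuml.
apply: functional_extensionality => x; apply: functional_extensionality => y.
rewrite /msum; under eq_bigr do rewrite mm_msumr /msum.
rewrite sum_pair; apply: eq_bigr => k _.
under eq_bigr do rewrite h.
rewrite sum_pair /msc /=.
under eq_bigr do rewrite -mulr_sumr.
by rewrite sum_delta'.
Qed.

Lemma proj_KK s t i : proj (KK s t i).
Proof. by apply: proj_tensor => //; apply: proj_tensor. Qed.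

Lemma KK_orth s t i j : mm (KK s t i) (KK s t j) = msc (i == j)%:R (KK s t i).
Proof.
case: i => [[b e] f]; case: j => [[b2 e2] f2].
rewrite /KK /= !mm_tensor !xpair_eqE (pvm_mm hRp hRs).
case: (eqVneq b b2) => [<-|nb] /=; last by rewrite !msc0 ?tensor0r ?msc_zero.
rewrite (pvm_mm (h0p s b) (h0s s b)) (pvm_mm (h1p t b) (h1s t b)).
rewrite msc1 tensor_msc_l tensor_msc_r msc_msc tensor_msc_l; congr msc.
by rewrite natr_andb.
Qed.

Lemma KK_sum s t : msum (KK s t) = @idm C Bb.
Proof.
have -> : msum (KK s t) =
  msum (fun b => tensor (tensor (msum (Pi0 s b)) (msum (Pi1 t b))) (Rm b)).
  apply: functional_extensionality => x; apply: functional_extensionality => y.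
  rewrite /msum /KK /tensor sum_pair sum_pair; apply: eq_bigr => b _ /=.
  rewrite !mulr_suml; apply: eq_bigr => e _; rewrite mulr_sumr mulr_suml.
  by apply: eq_bigr => f _.
have -> : (fun b => tensor (tensor (msum (Pi0 s b)) (msum (Pi1 t b))) (Rm b)) =
   (fun b => tensor (@idm C ('I_d0 * 'I_d1)%type) (Rm b)).
  by apply: functional_extensionality => b; rewrite h0s h1s -idm_pair.
by rewrite -tensor_msum_r hRs -idm_pair.
Qed.

Lemma XY_bound s t (z : (Ab * Bb)%type -> C) :
  dot (app (msum (XT s)) (app (msum (YT t)) z))
      (app (msum (XT s)) (app (msum (YT t)) z)) <= cst s t ^+ 2 * dot z z.
Proof.
rewrite -app_mm XY.
apply: (@bound_blocks _ _ _ _ (fun i => mm (AuxM s i.1.1 i.1.2) (AuxM t (~~ i.1.1) i.2))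
          (KK s t)).
- by apply: exprn_ge0; apply: cst_ge0.
- exact: proj_KK.
- exact: KK_orth.
- exact: KK_sum.
- move=> i w; exact: bound_AC.
Qed.

Lemma pair_bound s t :
  `|dot (app (Pis s) phi) (app (Pis t) phi)| ^+ 2 <=
    cst s t ^+ 2 * dot (app (Pis s) phi) (app (Pis s) phi) *
    dot (app (Pis t) phi) (app (Pis t) phi).
Proof.
have eu : app (msum (XT s)) (app (Pis s) phi) = app (Pis s) phi by rewrite -app_mm X_Pis.
have ev : app (msum (YT t)) (app (Pis t) phi) = app (Pis t) phi by rewrite -app_mm Y_Pis.
have e : dot (app (Pis s) phi) (app (Pis t) phi) =
         dot (app (Pis s) phi) (app (msum (XT s)) (app (msum (YT t)) (app (Pis t) phi))).
  by rewrite -(dot_herm _ _ (herm_X s)) eu ev.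
rewrite e; apply: (le_trans (CS _ _)).
apply: (le_trans (ler_wpM2l (dot_ge0 _) (XY_bound s t _))).
by rewrite mulrCA mulrA.
Qed.

Lemma phi_norm : dot phi phi = (#|Ab|)%:R.
Proof.
rewrite /dot sum_pair -sumr_const; apply: eq_bigr => a _ /=.
transitivity (\sum_e \sum_e' (chi e)^* * chi e' * \sum_b (U b (a, e))^* * U b (a, e')).
  rewrite /phi /=.
  under eq_bigr do rewrite rmorph_sum mulr_suml.
  rewrite exchange_big; apply: eq_bigr => e _.
  under eq_bigr do rewrite mulr_sumr.
  rewrite exchange_big; apply: eq_bigr => e' _.
  rewrite mulr_sumr; apply: eq_bigr => b _; rewrite rmorphM /=; ring.
under eq_bigr do under eq_bigr do rewrite hU.1 xpair_eqE eqxx /=.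
under eq_bigr do under eq_bigr do rewrite mulrC.
under eq_bigr do rewrite sum_delta'.
exact: hchi.
Qed.

Lemma sum_cst (s : bits n) : \sum_t cst s t = (1 + hc) ^+ n.
Proof.
rewrite /LocalM.cst.
rewrite -(bigA_distr_bigA (fun j b => if s j == b then 1 else hc)) /=.
rewrite (eq_bigr (fun _ => 1 + hc)); last by move=> j _; rewrite big_bool; case: (s j); rewrite /= // addrC.
by rewrite prodr_const card_ord.
Qed.

Lemma Psi_real (s r0 r1 : bits n) a : (Psi R s r0 r1 a)^*%R = Psi R s r0 r1 a.
Proof.
rewrite /Psi rmorph_prod; apply: eq_bigr => j _.
rewrite /psi; case: (s j); rewrite rmorphM /=;
  by rewrite (vb_real R false) (vb_real R true).
Qed.

Lemma Phi_eq (s r0 r1 : bits n) b :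
  Phi chi U s r0 r1 b = \sum_a Psi R s r0 r1 a * phi (a, b).
Proof.
rewrite /Phi sum_pair; apply: eq_bigr => a _.
rewrite /phi mulr_sumr; apply: eq_bigr => e _ /=; ring.
Qed.

Lemma term_eq (s r0 r1 : bits n) b' :
  dot phi (app (TT s (r0, r1, b')) phi) =
  \sum_b \sum_c (Phi chi U s r0 r1 b)^* * Kb s b' r0 r1 b c * Phi chi U s r0 r1 c.
Proof.
rewrite /TT /=.
have -> : Pr s r0 r1 = fun a a' => Psi R s r0 r1 a * Psi R s r0 r1 a'.
  by apply: functional_extensionality => a; apply: functional_extensionality => a';
     rewrite Pr_Psi.
rewrite dot_rank1; last exact: Psi_real.
by apply: eq_bigr => b _; apply: eq_bigr => c _; rewrite !Phi_eq.
Qed.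

Lemma stepA : success_prob chi U Rm Pi0 Pi1 =
  (2 ^+ (3 * n))^-1 * \sum_s dot phi (app (Pis s) phi).
Proof.
rewrite /success_prob; congr (_ * _).
symmetry.
under eq_bigr do rewrite /Pis app_msum dot_sumr sum_pair sum_pair.
rewrite exchange_big; apply: eq_bigr => r0 _.
rewrite exchange_big; apply: eq_bigr => r1 _.
apply: eq_bigr => s _; apply: eq_bigr => b' _.
by rewrite term_eq.
Qed.

Local Open Scope complex_scope.
Lemma main_sec : success_prob chi U Rm Pi0 Pi1 <=
  ((1 / 2 + 1 / (2 * Num.sqrt (2 : R))) ^+ n)%:C.
Proof.
rewrite stepA.
have C0 : 0 <= (1 + hc) ^+ n by apply: exprn_ge0; apply: addr_ge0 => //; exact: hc_ge0.
have csym : forall s t : bits n, cst s t = cst t s.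
  by move=> s t; rewrite /LocalM.cst; apply: eq_bigr => j _; rewrite eq_sym.
have hB := @sum_proj_bound _ _ _ Pis (@LocalM.cst R n) ((1 + hc) ^+ n) phi proj_Pis C0 cst_ge0 csym
  sum_cst pair_bound.
rewrite phi_norm in hB.
apply: (le_trans (ler_wpM2l _ hB)).
  by rewrite invr_ge0; apply: exprn_ge0; apply: ler0n.
rewrite card_ffun card_prod card_bool card_ord natrX exprM -exprVn -!exprMn rmorphXn.
rewrite le_eqVlt; apply/orP; left; apply/eqP; congr (_ ^+ n).
have q0 : Num.sqrt (2 : R) != 0 by rewrite sqrtr_eq0 -ltNge ltr0n.
have -> : (1 / 2 + 1 / (2 * Num.sqrt (2 : R))) = (1 + (Num.sqrt (2 : R))^-1) / 2.
  by field.
rewrite /LocalM.hc rmorphM rmorphD rmorph1 !fmorphV.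
set x2 := (X in _ / X).
have e2 : x2 = 2 by rewrite /x2 rmorph_nat.
rewrite e2 natrM.
field; by rewrite fmorph_eq0.
Qed.

End Main.

End MainM.
Import MainM.

Unset Implicit Arguments.
Local Open Scope ring_scope.
Local Open Scope complex_scope.

Theorem mainTheorem1 (R : realType) (n : nat) (hn : (0 < n)%N)
  (dE d0 d1 d' : nat) (chi : 'I_dE -> R[i])
  (U : 'I_d0 * 'I_d1 * 'I_d' -> Abasis n * 'I_dE -> R[i])
  (Rm : bool -> 'I_d' -> 'I_d' -> R[i])
  (Pi0 : bits n -> bool -> bits n -> 'I_d0 -> 'I_d0 -> R[i])
  (Pi1 : bits n -> bool -> bits n -> 'I_d1 -> 'I_d1 -> R[i]) :
  is_unit_vector chi ->
  is_unitary_op U ->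
  is_proj_meas Rm ->
  (forall s b', is_proj_meas (Pi0 s b')) ->
  (forall s b', is_proj_meas (Pi1 s b')) ->
  success_prob chi U Rm Pi0 Pi1
    <= ((1 / 2 + 1 / (2 * Num.sqrt (2 : R))) ^+ n)%:C.
Proof.
move=> hchi hU hR h0 h1.
exact: (MainM.main_sec hchi hU hR h0 h1).
Qed.
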